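(* Let $q$ be a prime with $q \equiv 1 \pmod 6$ or $q = 3$. Let $j \in \{3,6\}$ and let $s$ be an integer with $0 \le s < q$ such that $\Phi_j(s) \equiv 0 \pmod q$, where $\Phi_3(x) = x^2+x+1$ and $\Phi_6(x) = x^2-x+1$. Define $p_6(x) = \Phi_4(qx+s) = (qx+s)^2+1 \in \mathbb{Z}[x]$, \[ n_6(x)= \begin{cases} qx^2+(2s+1)x+\Phi_3(s)/q, & \text{if } q \mid \Phi_3(s),\\ qx^2+(2s-1)x+\Phi_6(s)/q, & \text{if } q \mid \Phi_6(s),\end{cases} \qquad t_6(x)= \begin{cases} 1-qx-s, & \text{if } q \mid \Phi_3(s),\\ 1+qx+s, & \text{if } q \mid \Phi_6(s).\end{cases} \] Then: (i) $q\,n_6(x) = p_6(x)+1-t_6(x)$; (ii) $q\,n_6(x)$ divides $\Phi_6(p_6(x))$ in $\mathbb{Z}[x]$; (iii) $t_6(x)^2-4p_6(x) \le 0$ for all $x$; (iv) $n_6(x)$ and $p_6(x)$ are irreducible over $\mathbb{Z}$; that is, $(n_6(x),p_6(x),t_6(x))$ parameterizes a family of generalized MNT elliptic curves with embedding degree $6$ in the sense described in the context. Moreover, for every integer $x$, if one writes $t_6(x)^2-4p_6(x) = \Delta Y^2$ with $\Delta<0$ a square-free integer and $Y \in \mathbb{Z}$, then \[ X^2 + 3\Delta Y^2 = -8, \qquad \text{where } X = \begin{cases} 3(qx+s)+1, & \text{if } q \mid \Phi_3(s),\\ 3(qx+s)-1, & \text{if } q \mid \Phi_6(s).\end{cases}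 \]
   Context: $\Phi_k(x)$ denotes the $k$th cyclotomic polynomial; $\Phi_3(x)=x^2+x+1$, $\Phi_4(x)=x^2+1$, $\Phi_6(x)=x^2-x+1$. A polynomial in $\mathbb{Z}[x]$ is called irreducible over $\mathbb{Z}$ if it is not a product of two non-constant polynomials with integer coefficients. For $k\in\{3,4,6\}$ and a prime $q$, a triple $(n_k(x),p_k(x),t_k(x))$ of polynomials in $\mathbb{Z}[x]$ is said to parameterize a family of generalized MNT elliptic curves with embedding degree $k$ if $q\,n_k(x) = p_k(x)+1-t_k(x)$, $q\,n_k(x) \mid \Phi_k(p_k(x))$, $t_k(x)^2-4p_k(x) \le 0$, and $n_k(x), p_k(x)$ are irreducible over $\mathbb{Z}$. (The paper's definition is stated for primes $q \equiv 1 \pmod k$, but the theorem is asserted also for $q=3$; the conclusion is therefore written out as the four listed properties.) *)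

(* Defs.v *)
From mathcomp Require Import all_boot all_order all_algebra.
Set Implicit Arguments. Unset Strict Implicit. Unset Printing Implicit Defensive.
Import Order.TTheory GRing.Theory Num.Theory.
Local Open Scope ring_scope.

Definition Phi3 : {poly int} := 'X^2 + 'X + 1.
Definition Phi4 : {poly int} := 'X^2 + 1.
Definition Phi6 : {poly int} := 'X^2 - 'X + 1.

Definition irreducible_Z (f : {poly int}) : Prop :=
  forall a b : {poly int}, f = a * b -> (size a <= 1)%N \/ (size b <= 1)%N.

Definition squarefree_int (D : int) : Prop :=
  forall d : int, (d * d %| D)%Z -> d = 1 \/ d = -1.

Definition p6 (q : nat) (s : int) : {poly int} :=
  Phi4 \Po ((q%:Z)%:P * 'X + s%:P).

Definition n6 (q : nat) (s : int) : {poly int} :=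
  if (q%:Z %| Phi3.[s])%Z
  then (q%:Z)%:P * 'X^2 + (2 * s + 1)%:P * 'X + ((Phi3.[s] %/ q%:Z)%Z)%:P
  else (q%:Z)%:P * 'X^2 + (2 * s - 1)%:P * 'X + ((Phi6.[s] %/ q%:Z)%Z)%:P.

Definition t6 (q : nat) (s : int) : {poly int} :=
  if (q%:Z %| Phi3.[s])%Z
  then 1 - (q%:Z)%:P * 'X - s%:P
  else 1 + (q%:Z)%:P * 'X + s%:P.

Definition X6 (q : nat) (s x : int) : int :=
  if (q%:Z %| Phi3.[s])%Z
  then 3 * (q%:Z * x + s) + 1
  else 3 * (q%:Z * x + s) - 1.

(* Main.v *)
Require Import Defs.
From mathcomp Require Import all_boot all_order all_algebra.
From mathcomp Require Import ring lra.
From mathcomp Require Import zify.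
Import Order.TTheory GRing.Theory Num.Theory.
Local Open Scope ring_scope.

Lemma irr_quad (c2 c1 c0 : int) : c2 != 0 -> c1 ^+ 2 - 4 * c2 * c0 < 0 ->
  irreducible_Z (c2%:P * 'X^2 + c1%:P * 'X + c0%:P).
Proof.
move=> c2n0 disc a b fab.
have cf i : (c2%:P * 'X^2 + c1%:P * 'X + c0%:P)`_i =
   (if i == 2%N then c2 else if i == 1%N then c1 else if i == 0%N then c0 else 0).
  by rewrite !coefD !coefCM coefXn coefX coefC; case: i => [|[|[|i]]] /=; lra.
have sf : leq (size (c2%:P * 'X^2 + c1%:P * 'X + c0%:P)) 3.
  by apply/leq_sizeP => i hi; rewrite cf; case: i hi => [|[|[|i]]].
have f0 : c2%:P * 'X^2 + c1%:P * 'X + c0%:P != 0.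
  by apply/eqP => h; move: (cf 2%N); rewrite h coef0 /= => h2; move: c2n0; rewrite -h2 eqxx.
have a0 : a != 0 by apply: contraNneq f0 => ha; rewrite fab ha mul0r.
have b0 : b != 0 by apply: contraNneq f0 => hb; rewrite fab hb mulr0.
case: (leqP (size a) 1) => [|ha]; first by left.
case: (leqP (size b) 1) => [|hb]; first by right.
exfalso.
move: sf; rewrite fab size_mul // => hs.
have {}hs : (size a + size b - 1 <= 3)%N by move: hs; rewrite -subn1.
have sa : size a = 2%N.
lia.
have sb : size b = 2%N by lia.
have az i : (2 <= i)%N -> a`_i = 0 by move=> hi; rewrite nth_default // sa.
have bz i : (2 <= i)%N -> b`_i = 0 by move=> hi; rewrite nth_default // sb.
have e0 := cf 0%N; have e1 := cf 1%N; have e2 := cf 2%N.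
rewrite fab !coefM !big_ord_recr !big_ord0 /= in e0 e1 e2.
rewrite !subn0 !subnn !subn1 /= !add0r in e0 e1 e2.
rewrite (az 2%N) // (bz 2%N) // in e2.
move: disc; rewrite -e0 -e1 -e2 /=.
set a1 := a`_1; set a2 := a`_0; set b1 := b`_1; set b2 := b`_0.
have -> : (a2 * b1 + a1 * b2) ^+ 2 - 4 * (a2 * 0 + a1 * b1 + 0 * b2) * (a2 * b2) = (a1*b2 - a2*b1)^+2 by ring.
by rewrite ltNge sqr_ge0.
Qed.

Theorem theorem1 (q j : nat) (s : int) :
  prime q ->
  (q %% 6 = 1 \/ q = 3)%N ->
  (j = 3 \/ j = 6)%N ->
  0 <= s < q%:Z ->
  (j = 3%N -> (q%:Z %| Phi3.[s])%Z) ->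
  (j = 6%N -> (q%:Z %| Phi6.[s])%Z) ->
  [/\ (q%:Z)%:P * n6 q s = p6 q s + 1 - t6 q s,
      (exists r : {poly int}, Phi6 \Po p6 q s = ((q%:Z)%:P * n6 q s) * r),
      (forall x : int, (t6 q s ^+ 2 - 4 * p6 q s).[x] <= 0),
      irreducible_Z (n6 q s) /\ irreducible_Z (p6 q s)
    & (forall x D Y : int,
         D < 0 -> squarefree_int D ->
         (t6 q s ^+ 2 - 4 * p6 q s).[x] = D * Y ^+ 2 ->
         X6 q s x ^+ 2 + 3 * D * Y ^+ 2 = -8)].
Proof.
move=> pq _ hj _ h3 h6.
have Qpos : 0 < q%:Z by rewrite ltz_nat prime_gt0.
set Q := q%:Z in Qpos h3 h6 *.
set U : {poly int} := Q%:P * 'X + s%:P.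
have hU x : U.[x] = Q * x + s by rewrite /U !hornerE.
have hp : p6 q s = U ^+ 2 + 1.
  by rewrite /p6 /Phi4 expr2 !(comp_polyD, comp_polyM, comp_polyX, comp_polyC) polyC1 -expr2.
have hP6 : Phi6 \Po p6 q s = p6 q s ^+ 2 - p6 q s + 1.
  by rewrite /Phi6 expr2 !(comp_polyD, comp_polyB, comp_polyM, comp_polyX, comp_polyC) polyC1 -expr2 raddfN /= comp_polyX.
have irrp : irreducible_Z (p6 q s).
  have -> : p6 q s = (Q*Q)%:P * 'X^2 + (2*s*Q)%:P * 'X + (s^+2+1)%:P.
    by rewrite hp /U; ring.
  apply: irr_quad; first by rewrite mulf_neq0 // gt_eqF.
  have -> : (2 * s * Q) ^+ 2 - 4 * (Q * Q) * (s ^+ 2 + 1) = - (4 * (Q * Q)) by ring.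
  by rewrite oppr_lt0 mulr_gt0 // mulr_gt0.
rewrite /n6 /t6 /X6; case: ifP => hd.
- set c := (Phi3.[s] %/ Q)%Z.
  have hc : c * Q = s ^+ 2 + s + 1 by rewrite divzK // /Phi3 !hornerE.
  have hn : Q%:P * (Q%:P * 'X^2 + (2 * s + 1)%:P * 'X + c%:P) = U ^+ 2 + U + 1.
    rewrite !mulrDr -polyCM [Q * c]mulrC hc /U.
    ring.
  have ht : (1 - Q%:P * 'X - s%:P : {poly int}) = 1 - U by rewrite /U; ring.
  have hev x : ((1 - Q%:P * 'X - s%:P) ^+ 2 - 4 * p6 q s).[x] = - 3 * (Q*x+s)^+2 - 2 * (Q*x+s) - 3.
    have -> : (1 - Q%:P * 'X - s%:P) ^+ 2 - 4 * p6 q s = (-3)%:P * U^+2 + (-2)%:P * U + (-3)%:P by rewrite ht hp; ring.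
    by rewrite !hornerD !hornerCM hornerC horner_exp hU; ring.
  split.
  + by rewrite hn ht hp; ring.
  + by exists (U ^+ 2 - U + 1); rewrite hP6 hn hp; ring.
  + move=> x; rewrite hev; set u := Q * x + s.
    have -> : - 3 * u ^+ 2 - 2 * u - 3 = - (2 * u ^+ 2 + (u + 1) ^+ 2 + 2) by ring.
    by rewrite oppr_le0 !addr_ge0 // ?sqr_ge0 // mulr_ge0 // sqr_ge0.
  + split => //; apply: irr_quad; first by rewrite gt_eqF.
    have -> : (2 * s + 1) ^+ 2 - 4 * Q * c = -3 by rewrite -mulrA [Q * c]mulrC hc; ring.
    by [].
  + move=> x D Y _ _; rewrite hev -mulrA => <-; ring.
- have hd6 : (Q %| Phi6.[s])%Z.
    by case: hj => hj; [by rewrite h3 in hd | exact: h6].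
  set c := (Phi6.[s] %/ Q)%Z.
  have hc : c * Q = s ^+ 2 - s + 1 by rewrite divzK // /Phi6 !hornerE.
  have hn : Q%:P * (Q%:P * 'X^2 + (2 * s - 1)%:P * 'X + c%:P) = U ^+ 2 - U + 1.
    rewrite !mulrDr -polyCM [Q * c]mulrC hc /U.
    ring.
  have ht : (1 + Q%:P * 'X + s%:P : {poly int}) = 1 + U by rewrite /U; ring.
  have hev x : ((1 + Q%:P * 'X + s%:P) ^+ 2 - 4 * p6 q s).[x] = - 3 * (Q*x+s)^+2 + 2 * (Q*x+s) - 3.
    have -> : (1 + Q%:P * 'X + s%:P) ^+ 2 - 4 * p6 q s = (-3)%:P * U^+2 + 2%:P * U + (-3)%:P by rewrite ht hp; ring.
    by rewrite !hornerD !hornerCM hornerC horner_exp hU; ring.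
  split.
  + by rewrite hn ht hp; ring.
  + by exists (U ^+ 2 + U + 1); rewrite hP6 hn hp; ring.
  + move=> x; rewrite hev; set u := Q * x + s.
    have -> : - 3 * u ^+ 2 + 2 * u - 3 = - (2 * u ^+ 2 + (u - 1) ^+ 2 + 2) by ring.
    by rewrite oppr_le0 !addr_ge0 // ?sqr_ge0 // mulr_ge0 // sqr_ge0.
  + split => //; apply: irr_quad; first by rewrite gt_eqF.
    have -> : (2 * s - 1) ^+ 2 - 4 * Q * c = -3 by rewrite -mulrA [Q * c]mulrC hc; ring.
    by [].
  + move=> x D Y _ _; rewrite hev -mulrA => <-; ring.
Qed.
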